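(* Let $F$ be a (randomized) mechanism for the multi-agent kidney exchange game, and for each agent $i$ let $x_i$ be the random variable giving the utility of agent $i$ in $F$. Then there exists a mechanism $F^*$ such that for every input graph and every agent $i$, $\mathrm{Var}(y_i)\le \frac{\mathrm{Var}(x_i)}{2}+1$ and $E[y_i]=E[x_i]$, where $y_i$ is the random variable giving the utility of agent $i$ in $F^*$.
   Context: An instance of the multi-agent kidney exchange game is a graph $G=(V,E)$ together with a partition $V=V_1\cup\dots\cup V_m$ of its vertices among $m$ agents. A mechanism maps each instance to a (possibly random) matching of $G$. The utility of agent $i$ with respect to a matching $M$ is the number of vertices of $V_i$ covered by $M$; the utility of agent $i$ in a mechanism is this quantity for the (random) matching output by the mechanism. *)

(* Defs.v *)
From mathcomp Require Import all_boot all_order all_algebra.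
Set Implicit Arguments. Unset Strict Implicit. Unset Printing Implicit Defensive.
Import Order.TTheory GRing.Theory Num.Theory.
Local Open Scope ring_scope.

(* An instance on n vertices ('I_n) and m agents ('I_m):
   - an edge set E : {set {set 'I_n}} (each edge a 2-element vertex set),
   - an owner function own : 'I_n -> 'I_m; V_i = [set v | own v == i]. *)

Definition simple_graph (n : nat) (E : {set {set 'I_n}}) : bool :=
  [forall e in E, #|e| == 2]%N.

Definition is_matching (n : nat) (E M : {set {set 'I_n}}) : bool :=
  (M \subset E) && trivIset M.

Definition utility (n m : nat) (own : 'I_n -> 'I_m) (i : 'I_m)
    (M : {set {set 'I_n}}) : nat :=
  #|[set v in cover M | own v == i]|.

Definition is_random_matching (R : numDomainType) (n : nat)
    (E : {set {set 'I_n}}) (p : {ffun {set {set 'I_n}} -> R}) : Prop :=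
  (forall M, 0 <= p M) /\ (\sum_M p M = 1) /\
  (forall M, p M != 0 -> is_matching E M).

Definition mechanism (R : numDomainType) :=
  forall (n m : nat), {set {set 'I_n}} -> ('I_n -> 'I_m) ->
    {ffun {set {set 'I_n}} -> R}.

Definition is_mechanism (R : numDomainType) (F : mechanism R) : Prop :=
  forall (n m : nat) (E : {set {set 'I_n}}) (own : 'I_n -> 'I_m),
    simple_graph E -> is_random_matching E (F n m E own).

Definition exp_utility (R : numDomainType) (F : mechanism R) (n m : nat)
    (E : {set {set 'I_n}}) (own : 'I_n -> 'I_m) (i : 'I_m) : R :=
  \sum_M F n m E own M * (utility own i M)%:R.

Definition var_utility (R : numDomainType) (F : mechanism R) (n m : nat)
    (E : {set {set 'I_n}}) (own : 'I_n -> 'I_m) (i : 'I_m) : R :=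
  \sum_M F n m E own M * ((utility own i M)%:R - exp_utility F E own i) ^+ 2.

(* Main.v *)
Require Import Defs.
From mathcomp Require Import all_boot all_order all_algebra.
From mathcomp Require Import reals.
From mathcomp Require Import zify ring lra.
From Stdlib Require Import ClassicalEpsilon.
Import Order.TTheory GRing.Theory Num.Theory.
Set Implicit Arguments. Unset Strict Implicit. Unset Printing Implicit Defensive.
Local Open Scope ring_scope.
Definition sg (b : bool) (x : int) : int := if b then x else - x.

Lemma sgD b x y : sg b (x + y) = sg b x + sg b y.
Proof. by case: b => /=; rewrite ?opprD. Qed.
Lemma sg0 b : sg b 0 = 0.
Proof. by case: b; rewrite /= ?oppr0. Qed.
Lemma sg_eq e b y : sg (e == b) y = sg e (sg b y).
Proof. by case: e; case: b; rewrite /= ?opprK. Qed.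

Lemma sum_norm_ge (I : finType) (F : I -> int) j : `|F j| <= \sum_i `|F i|.
Proof.
rewrite (bigD1 j) //= lerDl; apply: sumr_ge0 => i _; exact: normr_ge0.
Qed.

Section LB.
Variables (I A : finType).

Definition nzB (a : I -> A -> int) := [set t | [exists i, a t i != 0]].

Lemma lemB_base (a : I -> A -> int) :
  (forall t, \sum_i `|a t i| <= 2) ->
  ~~ [exists t, exists s, exists i, [&& t != s, a t i != 0 & a s i != 0]] ->
  exists eps : I -> bool, forall i, `|\sum_t sg (eps t) (a t i)| <= 2.
Proof.
move=> Hl Hn; exists (fun _ => true) => i /=.
case: (boolP [exists t, a t i != 0]) => [/existsP [t Ht]|/existsPn H0].
  rewrite (bigD1 t) //= big1 ?addr0.
    exact: le_trans (sum_norm_ge _ i) (Hl t).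
  move=> s Hst; apply/eqP; apply: contraR Hn => Hs.
  by apply/existsP; exists t; apply/existsP; exists s; apply/existsP; exists i;
    rewrite eq_sym Hst Ht Hs.
rewrite big1 ?normr0 // => t _; exact/eqP/negPn/H0.
Qed.

Lemma lemB_all n (a : I -> A -> int) : (#|nzB a| <= n)%N ->
  (forall t, \sum_i `|a t i| <= 2) ->
  exists eps : I -> bool, forall i, `|\sum_t sg (eps t) (a t i)| <= 2.
Proof.
elim: n a => [|n IH] a Hc Hl;
 (case: (boolP [exists t, exists s, exists i, [&& t != s, a t i != 0 & a s i != 0]]);
   last by apply: lemB_base).
  case/existsP => t /existsP [s /existsP [i /and3P [_ Ht _]]].
  have : (0 < #|nzB a|)%N by apply/card_gt0P; exists t; rewrite inE; apply/existsP; exists i.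
  lia.
case/existsP => t /existsP [s /existsP [i /and3P [Hts Ht Hs]]].
pose b := (0 < a t i) != (0 < a s i).
pose a' := fun u => if u == t then (fun j => a t j + sg b (a s j))
                    else if u == s then (fun _ => 0) else a u.
have Hsub : nzB a' \subset nzB a :\ s.
  apply/subsetP => u; rewrite !inE /a' => /existsP [j].
  case: (eqVneq u t) => [->|Hut].
    by move=> _; rewrite Hts /=; apply/existsP; exists i.
  case: (eqVneq u s) => [_|Hus]; first by rewrite eqxx.
  by move=> H; apply/existsP; exists j.
have Hc' : (#|nzB a'| <= n)%N.
  have := subset_leq_card Hsub; have := cardsD1 s (nzB a).
  have -> : s \in nzB a by rewrite inE; apply/existsP; exists i.
  lia.
have Hl' : forall u, \sum_j `|a' u j| <= 2.
  move=> u; rewrite /a'; case: (eqVneq u t) => [_|_].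
    have E : forall j, `|a t j + sg b (a s j)| <= `|a t j| + `|a s j|
                       - (if j == i then 2 else 0).
      move=> j; case: (eqVneq j i) => [->|_]; last first.
        by rewrite subr0 /sg; case: ifP => _; lia.
      move: Ht Hs; rewrite /b /sg.
      case: (boolP (0 < a t i)) => H1; case: (boolP (0 < a s i)) => H2 /=; lia.
    apply: le_trans (ler_sum _ (fun j _ => E j)) _.
    rewrite sumrB big_split /=.
    have -> : \sum_j (if j == i then 2 else 0) = 2 :> int.
      by rewrite -big_mkcond /= big_pred1_eq.
    have := Hl t; have := Hl s.
    move=> Hx Hy; rewrite lerBlDr; exact: le_trans (lerD Hy Hx) _.
  case: (eqVneq u s) => _ /=; last exact: Hl.
  by rewrite big1 ?normr0 //.
have [eps' Heps] := IH a' Hc' Hl'.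
exists (fun u => if u == s then eps' t == b else eps' u) => j.
have -> : \sum_u sg (if u == s then eps' t == b else eps' u) (a u j)
        = \sum_u sg (eps' u) (a' u j).
  have Hst : s != t by rewrite eq_sym.
  rewrite (bigD1 t) //= (bigD1 s) ?Hst //=.
  rewrite [in RHS](bigD1 t) //= [in RHS](bigD1 s) ?Hst //=.
  rewrite /a' eqxx (negbTE Hts) (negbTE Hst) eqxx /=.
  rewrite sg0 add0r sgD sg_eq !addrA; congr (_ + _).
  apply: eq_bigr => u /andP [Hut Hus].
  by rewrite (negbTE Hut) (negbTE Hus).
exact: Heps.
Qed.

Lemma lemB (a : I -> A -> int) :
  (forall t, \sum_i `|a t i| <= 2) ->
  exists eps : I -> bool, forall i, `|\sum_t sg (eps t) (a t i)| <= 2.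
Proof. exact: (@lemB_all #|nzB a|). Qed.

End LB.

Section LA.
Variables (I V A : finType) (own : V -> A).

Definition nzA (D : I -> V -> int) := [set t | [exists v, D t v != 0]].
Definition agsum (D : I -> V -> int) t i := \sum_(v | own v == i) D t v.

Lemma lemA_base (D : I -> V -> int) :
  (forall t, \sum_v `|D t v| <= 2) ->
  ~~ [exists v, exists t, exists s, (0 < D t v) && (D s v < 0)] ->
  exists eps : I -> bool,
    (forall v t s, 0 < D t v -> D s v < 0 -> eps t = eps s) /\
    (forall i, `|\sum_t sg (eps t) (agsum D t i)| <= 2).
Proof.
move=> Hl Hn.
have HB : forall t, \sum_i `|agsum D t i| <= 2.
  move=> t; apply: le_trans (Hl t).
  rewrite (partition_big own (fun _ => true)) //=.
  apply: ler_sum => i _; exact: ler_norm_sum.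
have [eps Heps] := lemB HB.
exists eps; split => // v t s H1 H2; exfalso; move/negP: Hn; apply.
by apply/existsP; exists v; apply/existsP; exists t; apply/existsP; exists s; rewrite H1 H2.
Qed.

Lemma lemA_all n (D : I -> V -> int) : (#|nzA D| <= n)%N ->
  (forall t, \sum_v `|D t v| <= 2) ->
  (forall v t s, 0 < D t v -> 0 < D s v -> t = s) ->
  (forall v t s, D t v < 0 -> D s v < 0 -> t = s) ->
  exists eps : I -> bool,
    (forall v t s, 0 < D t v -> D s v < 0 -> eps t = eps s) /\
    (forall i, `|\sum_t sg (eps t) (agsum D t i)| <= 2).
Proof.
elim: n D => [|n IH] D Hc Hl Hp Hm;
 (case: (boolP [exists v, exists t, exists s, (0 < D t v) && (D s v < 0)]);
   last by apply: lemA_base).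
  case/existsP => v /existsP [t /existsP [s /andP [Ht _]]].
  have : (0 < #|nzA D|)%N.
    by apply/card_gt0P; exists t; rewrite inE; apply/existsP; exists v; rewrite gt_eqF.
  lia.
case/existsP => v0 /existsP [t /existsP [s /andP [Ht Hs]]].
have Hts : t != s by apply/eqP => E; move: Ht Hs; rewrite E; lia.
have Hst : s != t by rewrite eq_sym.
pose D' := fun u => if u == t then (fun v => D t v + D s v)
                    else if u == s then (fun _ => 0) else D u.
pose phi := fun u => if u == s then t else u.
have Hsub : nzA D' \subset nzA D :\ s.
  apply/subsetP => u; rewrite !inE /D' => /existsP [j].
  case: (eqVneq u t) => [->|Hut].
    by move=> _; rewrite Hts /=; apply/existsP; exists v0; rewrite gt_eqF.
  case: (eqVneq u s) => [_|Hus]; first by rewrite eqxx.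
  by move=> H; apply/existsP; exists j.
have Hc' : (#|nzA D'| <= n)%N.
  have := subset_leq_card Hsub; have := cardsD1 s (nzA D).
  have -> : s \in nzA D by rewrite inE; apply/existsP; exists v0; rewrite lt_eqF.
  lia.
have Hl' : forall u, \sum_j `|D' u j| <= 2.
  move=> u; rewrite /D'; case: (eqVneq u t) => [_|_].
    have E : forall j, `|D t j + D s j| <= `|D t j| + `|D s j|
                       - (if j == v0 then 2 else 0).
      move=> j; case: (eqVneq j v0) => [->|_]; last by rewrite subr0; lia.
      move: Ht Hs; lia.
    apply: le_trans (ler_sum _ (fun j _ => E j)) _.
    rewrite sumrB big_split /=.
    have -> : \sum_j (if j == v0 then 2 else 0) = 2 :> int.
      by rewrite -big_mkcond /= big_pred1_eq.
    have := Hl t; have := Hl s.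
    move=> Hx Hy; rewrite lerBlDr; exact: le_trans (lerD Hy Hx) _.
  case: (eqVneq u s) => _ /=; last exact: Hl.
  by rewrite big1 ?normr0 //.
have Hpos' : forall u w, 0 < D' u w -> exists u0, phi u0 = u /\ 0 < D u0 w.
  move=> u w; rewrite /D'; case: (eqVneq u t) => [->|Hut].
    case: (ltP 0 (D t w)) => H1 H2; first by exists t; rewrite /phi (negbTE Hts).
    by exists s; rewrite /phi eqxx; split => //; lia.
  case: (eqVneq u s) => [_|Hus]; first by rewrite ltxx.
  by move=> H; exists u; rewrite /phi (negbTE Hus).
have Hneg' : forall u w, D' u w < 0 -> exists u0, phi u0 = u /\ D u0 w < 0.
  move=> u w; rewrite /D'; case: (eqVneq u t) => [->|Hut].
    case: (ltP (D t w) 0) => H1 H2; first by exists t; rewrite /phi (negbTE Hts).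
    by exists s; rewrite /phi eqxx; split => //; lia.
  case: (eqVneq u s) => [_|Hus]; first by rewrite ltxx.
  by move=> H; exists u; rewrite /phi (negbTE Hus).
have Hp' : forall v t s, 0 < D' t v -> 0 < D' s v -> t = s.
  move=> w x y /Hpos' [x0 [E1 H1]] /Hpos' [y0 [E2 H2]]; rewrite -E1 -E2.
  by rewrite (Hp _ _ _ H1 H2).
have Hm' : forall v t s, D' t v < 0 -> D' s v < 0 -> t = s.
  move=> w x y /Hneg' [x0 [E1 H1]] /Hneg' [y0 [E2 H2]]; rewrite -E1 -E2.
  by rewrite (Hm _ _ _ H1 H2).
have [eps' [Heps1 Heps2]] := IH D' Hc' Hl' Hp' Hm'.
have Hpx : forall x w, 0 < D x w ->
    0 < D' (phi x) w \/ (forall y, D y w < 0 -> phi y = phi x).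
  move=> x w Hx; rewrite /phi /D'.
  case: (eqVneq x s) => [Exs|Hxs].
    subst x; rewrite ?eqxx /=; case: (ltP (D t w) 0) => H.
      by right => y Hy; rewrite (Hm _ _ _ Hy H); case: ifP.
    by left; lia.
  case: (eqVneq x t) => [Ext|Hxt].
    subst x; rewrite ?eqxx /=; case: (ltP (D s w) 0) => H.
      by right => y Hy; rewrite (Hm _ _ _ Hy H) eqxx.
    by left; lia.
  by left; rewrite ?(negbTE Hxt) ?(negbTE Hxs).
have Hnx : forall x w, D x w < 0 ->
    D' (phi x) w < 0 \/ (forall y, 0 < D y w -> phi y = phi x).
  move=> x w Hx; rewrite /phi /D'.
  case: (eqVneq x s) => [Exs|Hxs].
    subst x; rewrite ?eqxx /=; case: (ltP 0 (D t w)) => H.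
      by right => y Hy; rewrite (Hp _ _ _ Hy H); case: ifP.
    by left; lia.
  case: (eqVneq x t) => [Ext|Hxt].
    subst x; rewrite ?eqxx /=; case: (ltP 0 (D s w)) => H.
      by right => y Hy; rewrite (Hp _ _ _ Hy H) eqxx.
    by left; lia.
  by left; rewrite ?(negbTE Hxt) ?(negbTE Hxs).
exists (fun u => eps' (phi u)); split.
  move=> w x y Hx Hy.
  case: (Hpx x w Hx) => [H1|H1]; last by rewrite (H1 y Hy).
  case: (Hnx y w Hy) => [H2|H2]; last by rewrite (H2 x Hx).
  exact: Heps1 H1 H2.
move=> i.
have -> : \sum_u sg (eps' (phi u)) (agsum D u i) = \sum_u sg (eps' u) (agsum D' u i).
  rewrite (bigD1 t) //= (bigD1 s) ?Hst //=.
  rewrite [in RHS](bigD1 t) //= [in RHS](bigD1 s) ?Hst //=.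
  rewrite /agsum /D' /phi eqxx (negbTE Hts) (negbTE Hst) eqxx /=.
  rewrite [X in sg (eps' s) X]big1 // sg0 add0r big_split sgD !addrA; congr (_ + _).
  apply: eq_bigr => u /andP [Hut Hus].
  by rewrite (negbTE Hut) (negbTE Hus).
exact: Heps2.
Qed.

Lemma lemA (D : I -> V -> int) :
  (forall t, \sum_v `|D t v| <= 2) ->
  (forall v t s, 0 < D t v -> 0 < D s v -> t = s) ->
  (forall v t s, D t v < 0 -> D s v < 0 -> t = s) ->
  exists eps : I -> bool,
    (forall v t s, 0 < D t v -> D s v < 0 -> eps t = eps s) /\
    (forall i, `|\sum_t sg (eps t) (agsum D t i)| <= 2).
Proof. exact: (@lemA_all #|nzA D|). Qed.

End LA.

Section Pair.
Variables (n m : nat) (E : {set {set 'I_n}}) (own : 'I_n -> 'I_m).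
Variables (M1 M2 : {set {set 'I_n}}).

Definition cM (e : {set 'I_n}) : int :=
  if e \in M1 then (if e \in M2 then 0 else 1) else if e \in M2 then -1 else 0.
Definition Dm (e : {set 'I_n}) (v : 'I_n) : int := if v \in e then cM e else 0.
Definition wt (i : 'I_m) (e : {set 'I_n}) : nat := (\sum_v ((v \in e) && (own v == i) : nat))%N.

Lemma util_sum (M : {set {set 'I_n}}) i : trivIset M ->
  utility own i M = (\sum_e (e \in M) * wt i e)%N.
Proof.
move=> T.
have -> : utility own i M = (\sum_(v in cover M) (own v == i : nat))%N.
  rewrite /utility -sum1_card big_mkcond [RHS]big_mkcond.
  by apply: eq_bigr => v _; rewrite inE; case: (v \in cover M); case: (own v == i).
rewrite big_trivIset // big_mkcond; apply: eq_bigr => e _.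
case: (e \in M) => //=; rewrite mul1n /wt big_mkcond; apply: eq_bigr => v _.
by case: (v \in e); case: (own v == i).
Qed.

Lemma Dm_pos e v : (0 < Dm e v) = [&& v \in e, e \in M1 & e \notin M2].
Proof.
by rewrite /Dm /cM; case: (v \in e); case: (e \in M1); case: (e \in M2).
Qed.
Lemma Dm_neg e v : (Dm e v < 0) = [&& v \in e, e \in M2 & e \notin M1].
Proof.
by rewrite /Dm /cM; case: (v \in e); case: (e \in M1); case: (e \in M2).
Qed.

Definition Nset (g : {set 'I_n} -> bool) :=
  [set e | if e \in M1 then (e \in M2) || g e else (e \in M2) && ~~ g e].

Hypothesis HE : simple_graph E.
Hypothesis H1 : is_matching E M1.
Hypothesis H2 : is_matching E M2.

Lemma Nset_matching (g : {set 'I_n} -> bool) :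
  (forall (v : 'I_n) (e f : {set 'I_n}), v \in e -> v \in f -> e \in M1 -> e \notin M2 ->
     f \in M2 -> f \notin M1 -> g e = g f) ->
  is_matching E (Nset g).
Proof.
move=> Hg; move: H1 H2; rewrite /is_matching => /andP [/subsetP S1 T1] /andP [/subsetP S2 T2].
apply/andP; split.
  apply/subsetP => e; rewrite inE.
  by case: (boolP (e \in M1)) => [/S1 //|_ /andP [/S2 //]].
move/trivIsetP: T1 => T1; move/trivIsetP: T2 => T2.
have cross : forall e f, e \in M1 -> e \notin M2 -> g e ->
    f \in M2 -> f \notin M1 -> ~~ g f -> [disjoint e & f].
  move=> e f e1 e2 ge f2 f1 gf; rewrite -setI_eq0; apply/eqP/setP => v.
  rewrite !inE; apply/negP => /andP [ve vf].
  by move: gf; rewrite -(Hg v e f) // ge.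
apply/trivIsetP => e f; rewrite !inE => He Hf Hef.
move: He Hf.
case: (boolP (e \in M1)) => e1; case: (boolP (f \in M1)) => f1.
- by move=> _ _; apply: T1.
- case: (boolP (e \in M2)) => e2 /=.
    by move=> _ /andP [f2 _]; apply: T2.
  move=> ge /andP [f2 gf]; exact: cross.
- case: (boolP (f \in M2)) => f2 /=.
    by move=> /andP [e2 _] _; apply: T2.
  move=> /andP [e2 ge] gf; rewrite disjoint_sym; apply: cross => //.
- by move=> /andP [e2 _] /andP [f2 _]; apply: T2.
Qed.

Lemma pair_main : exists N N', [/\ is_matching E N, is_matching E N' &
  forall i, (utility own i N + utility own i N' =
             utility own i M1 + utility own i M2)%N /\
            (utility own i N <= utility own i N' + 2)%N /\
            (utility own i N' <= utility own i N + 2)%N].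
Proof.
have HE' : forall e, e \in E -> #|e| = 2%N.
  by move=> e He; move/forall_inP: HE => /(_ e He) /eqP.
have [S1 T1] : M1 \subset E /\ trivIset M1 by apply/andP; exact: H1.
have [S2 T2] : M2 \subset E /\ trivIset M2 by apply/andP; exact: H2.
have Hl : forall e, \sum_v `|Dm e v| <= 2.
  move=> e; case: (boolP ((e \in M1) || (e \in M2))) => Hin; last first.
    rewrite big1 //= => v _; rewrite /Dm /cM.
    by move: Hin; case: (e \in M1); case: (e \in M2); case: (v \in e).
  have He : e \in E.
    by case/orP: Hin => H; [apply: (subsetP S1) | apply: (subsetP S2)].
  have Hc : (\sum_v (v \in e : nat))%N = 2%N.
    rewrite -(HE' e He) -sum1_card [RHS]big_mkcond /=.
    by apply: eq_bigr => v _; case: (v \in e).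
  apply: (@le_trans _ _ ((\sum_v (v \in e : nat))%N%:R)); last by rewrite Hc.
  rewrite natr_sum; apply: ler_sum => v _; rewrite /Dm /cM.
  by case: (v \in e); case: (e \in M1); case: (e \in M2).
have Hp : forall v t s, 0 < Dm t v -> 0 < Dm s v -> t = s.
  move=> v t s; rewrite !Dm_pos => /and3P [vt t1 _] /and3P [vs s1 _].
  apply/eqP; apply/negP => /negP Hts.
  by move/trivIsetP: T1 => /(_ t s t1 s1 Hts) /disjointFr /(_ vt); rewrite vs.
have Hm : forall v t s, Dm t v < 0 -> Dm s v < 0 -> t = s.
  move=> v t s; rewrite !Dm_neg => /and3P [vt t1 _] /and3P [vs s1 _].
  apply/eqP; apply/negP => /negP Hts.
  by move/trivIsetP: T2 => /(_ t s t1 s1 Hts) /disjointFr /(_ vt); rewrite vs.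
have [eps [Heps1 Heps2]] := lemA own Hl Hp Hm.
exists (Nset eps), (Nset (fun e => ~~ eps e)); split.
- apply: Nset_matching => v e f ve vf e1 e2 f2 f1.
  by apply: (Heps1 v); [rewrite Dm_pos ve e1 e2 | rewrite Dm_neg vf f2 f1].
- apply: Nset_matching => v e f ve vf e1 e2 f2 f1; congr (~~ _).
  by apply: (Heps1 v); [rewrite Dm_pos ve e1 e2 | rewrite Dm_neg vf f2 f1].
move=> i.
have TN : forall g : {set 'I_n} -> bool, (forall (v : 'I_n) (e f : {set 'I_n}), v \in e -> v \in f -> e \in M1 -> e \notin M2 ->
     f \in M2 -> f \notin M1 -> g e = g f) -> trivIset (Nset g).
  by move=> g Hg; have /andP [] := Nset_matching Hg.
have TN1 : trivIset (Nset eps).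
  apply: TN => v e f ve vf e1 e2 f2 f1.
  by apply: (Heps1 v); [rewrite Dm_pos ve e1 e2 | rewrite Dm_neg vf f2 f1].
have TN2 : trivIset (Nset (fun e => ~~ eps e)).
  apply: TN => v e f ve vf e1 e2 f2 f1; congr (~~ _).
  by apply: (Heps1 v); [rewrite Dm_pos ve e1 e2 | rewrite Dm_neg vf f2 f1].
rewrite !util_sum //.
split.
  rewrite -!big_split /=; apply: eq_bigr => e _; rewrite !inE -!mulnDl; congr (_ * _)%N.
  by case: (e \in M1); case: (e \in M2); case: (eps e).
have Hd : ((\sum_e (e \in Nset eps) * wt i e)%N%:R -
           (\sum_e (e \in Nset (fun e => ~~ eps e)) * wt i e)%N%:R : int)
          = \sum_t sg (eps t) (agsum own Dm t i).
  rewrite !natr_sum -sumrB; apply: eq_bigr => e _.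
  have -> : agsum own Dm e i = cM e * (wt i e)%:R.
    rewrite /agsum /wt natr_sum mulr_sumr big_mkcond /=; apply: eq_bigr => v _.
    rewrite /Dm; case: (own v == i); case: (v \in e) => /=;
      by rewrite ?mulr0 ?mulr1.
  rewrite !natrM !inE /cM /sg.
  case: (e \in M1); case: (e \in M2); case: (eps e) => /=;
    rewrite ?mul0r ?mul1r ?subr0 ?sub0r ?subrr ?mulN1r ?opprK //.
have := Heps2 i; rewrite -Hd.
move: (\sum_e (e \in Nset eps) * wt i e)%N (\sum_e (e \in Nset (fun e => ~~ eps e)) * wt i e)%N.
move=> x y H; lia.
Qed.

End Pair.

Lemma set0_matching n (E : {set {set 'I_n}}) : is_matching E set0.
Proof. by apply/andP; split; [exact: sub0set | apply/trivIsetP => A B; rewrite inE]. Qed.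

Section Prob.
Variable R : realType.

Lemma dbl (T : finType) (p A B C D : T -> R) :
  \sum_x \sum_y p x * p y * (A x + B y + C x * D y) =
  (\sum_x p x * A x) * (\sum_y p y) + (\sum_x p x) * (\sum_y p y * B y) +
  (\sum_x p x * C x) * (\sum_y p y * D y).
Proof.
rewrite !big_distrlr /=.
transitivity (\sum_x (\sum_y p x * A x * p y + \sum_y p x * (p y * B y)
   + \sum_y p x * C x * (p y * D y))); last by rewrite !big_split.
apply: eq_bigr => x _.
transitivity (\sum_y (p x * A x * p y + p x * (p y * B y) + p x * C x * (p y * D y))).
  by apply: eq_bigr => y _; ring.
by rewrite !big_split.
Qed.

Lemma inst n m (E : {set {set 'I_n}}) (own : 'I_n -> 'I_m)
  (p : {ffun {set {set 'I_n}} -> R}) :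
  simple_graph E -> is_random_matching E p ->
  exists q : {ffun {set {set 'I_n}} -> R}, is_random_matching E q /\
   forall i, let u := fun M => (utility own i M)%:R : R in
     let mu := \sum_M p M * u M in
     \sum_M q M * u M = mu /\
     \sum_M q M * (u M - mu) ^+ 2 <= (\sum_M p M * (u M - mu) ^+ 2) / 2 + 1.
Proof.
move=> HE [Hp0 [Hp1 Hps]].
have Hch : forall M1 M2 : {set {set 'I_n}}, exists NN : {set {set 'I_n}} * {set {set 'I_n}},
   [/\ is_matching E NN.1, is_matching E NN.2 &
    is_matching E M1 -> is_matching E M2 -> forall i,
      (utility own i NN.1 + utility own i NN.2 =
             utility own i M1 + utility own i M2)%N /\
            (utility own i NN.1 <= utility own i NN.2 + 2)%N /\
            (utility own i NN.2 <= utility own i NN.1 + 2)%N].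
  move=> M1 M2.
  case: (boolP (is_matching E M1 && is_matching E M2)) => [/andP [H1 H2]|Hn].
    have [N [N' [HN HN' Hu]]] := pair_main own HE H1 H2.
    by exists (N, N'); split.
  exists (set0, set0); split; try exact: set0_matching.
  by move=> H1 H2; move: Hn; rewrite H1 H2.
pose NN := fun M1 M2 => proj1_sig (constructive_indefinite_description _ (Hch M1 M2)).
have HNN : forall M1 M2, _ := fun M1 M2 => proj2_sig (constructive_indefinite_description _ (Hch M1 M2)).
pose q := [ffun M => \sum_M1 \sum_M2 p M1 * p M2 *
            (((M == (NN M1 M2).1)%:R + (M == (NN M1 M2).2)%:R) / 2)].
have key : forall f : {set {set 'I_n}} -> R, \sum_M q M * f M =
   \sum_M1 \sum_M2 p M1 * p M2 * ((f (NN M1 M2).1 + f (NN M1 M2).2) / 2).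
  move=> f.
  under eq_bigr => M _ do rewrite ffunE mulr_suml.
  rewrite exchange_big /=; apply: eq_bigr => M1 _.
  under eq_bigr => M _ do rewrite mulr_suml.
  rewrite exchange_big /=; apply: eq_bigr => M2 _.
  under eq_bigr => M _ do rewrite -mulrA.
  rewrite -mulr_sumr; congr (_ * _).
  have H1 : forall N, \sum_M (M == N)%:R * f M = f N.
    move=> N; rewrite (bigD1 N) //= eqxx mul1r big1 ?addr0 //.
    by move=> M /negbTE ->; rewrite mul0r.
  transitivity (\sum_M ((M == (NN M1 M2).1)%:R * f M / 2
      + (M == (NN M1 M2).2)%:R * f M / 2)).
    by apply: eq_bigr => M _; ring.
  rewrite big_split /= -!mulr_suml !H1; ring.
have Hpair : forall (i : 'I_m) (M1 M2 : {set {set 'I_n}}) (G : R -> R -> R -> R -> R),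
   (forall x y s t : R, x + y = s + t -> x <= y + 2 -> y <= x + 2 -> G x y s t >= 0) ->
   0 <= p M1 * p M2 * G (utility own i (NN M1 M2).1)%:R (utility own i (NN M1 M2).2)%:R
        (utility own i M1)%:R (utility own i M2)%:R.
  move=> i M1 M2 G HG.
  case: (eqVneq (p M1) 0) => [->|n1]; first by rewrite !mul0r.
  case: (eqVneq (p M2) 0) => [->|n2]; first by rewrite mulr0 mul0r.
  apply: mulr_ge0; first exact: mulr_ge0.
  have [_ _ Hf] := HNN M1 M2.
  have [Ha [Hb Hc]] := Hf (Hps _ n1) (Hps _ n2) i.
  apply: HG.
  - by rewrite -!natrD Ha.
  - by rewrite -natrD ler_nat.
  - by rewrite -natrD ler_nat.
exists q; split.
  split; [|split].
  - move=> M; rewrite ffunE; apply: sumr_ge0 => M1 _; apply: sumr_ge0 => M2 _.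
    apply: mulr_ge0; first exact: mulr_ge0.
    by apply: divr_ge0 => //; apply: addr_ge0.
  - transitivity (\sum_M q M * 1); first by apply: eq_bigr => M _; rewrite mulr1.
    rewrite key; transitivity ((\sum_M p M) * (\sum_M p M)); last by rewrite Hp1 mul1r.
    rewrite big_distrlr /=; apply: eq_bigr => M1 _; apply: eq_bigr => M2 _; by field.
  - move=> M; apply: contraR => HM; rewrite ffunE big1 // => M1 _.
    rewrite big1 // => M2 _.
    have [Ha Hb _] := HNN M1 M2.
    have -> : (M == (NN M1 M2).1) = false by apply/eqP => E1; move: HM; rewrite E1 Ha.
    have -> : (M == (NN M1 M2).2) = false by apply/eqP => E1; move: HM; rewrite E1 Hb.
    by rewrite addr0 mul0r mulr0.
move=> i u mu.
have Hmu : \sum_M q M * u M = mu.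
  rewrite key.
  transitivity (\sum_M1 \sum_M2 p M1 * p M2 * (u M1 / 2 + u M2 / 2 + 0 * 0)).
    apply: eq_bigr => M1 _; apply: eq_bigr => M2 _; apply/eqP; rewrite eq_le.
    apply/andP; split; rewrite -subr_ge0.
      rewrite -mulrBr; apply: (Hpair i M1 M2 (fun x y s t => (s / 2 + t / 2 + 0 * 0) - (x + y) / 2)).
      by move=> x y s t Hxy _ _; lra.
    rewrite -mulrBr; apply: (Hpair i M1 M2 (fun x y s t => (x + y) / 2 - (s / 2 + t / 2 + 0 * 0))).
    by move=> x y s t Hxy _ _; lra.
  rewrite (dbl p (fun M => u M / 2) (fun M => u M / 2) (fun _ => 0) (fun _ => 0)) /=.
  have -> : \sum_x p x * (u x / 2) = mu / 2.
    by rewrite /mu mulr_suml; apply: eq_bigr => M _; ring.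
  have -> : \sum_x p x * 0 = 0 :> R by rewrite big1 // => M _; rewrite mulr0.
  rewrite Hp1; lra.
split => //.
have Hd0 : \sum_M p M * (u M - mu) = 0.
  under eq_bigr => M _ do rewrite mulrBr.
  by rewrite sumrB -mulr_suml Hp1 mul1r subrr.
rewrite key.
apply: (@le_trans _ _ (\sum_M1 \sum_M2 p M1 * p M2 *
   (((u M1 - mu) ^+ 2 / 4 + 1) + (u M2 - mu) ^+ 2 / 4 + ((u M1 - mu) / 2) * (u M2 - mu)))).
  apply: ler_sum => M1 _; apply: ler_sum => M2 _; rewrite -subr_ge0 -mulrBr.
  apply: (Hpair i M1 M2 (fun x y s t => (((s - mu) ^+ 2 / 4 + 1) + (t - mu) ^+ 2 / 4
     + ((s - mu) / 2) * (t - mu)) - ((x - mu) ^+ 2 + (y - mu) ^+ 2) / 2)).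
  move=> x y s t H1 H2 H3; rewrite subr_ge0; nra.
rewrite dbl Hd0 mulr0 addr0 Hp1 mulr1 mul1r.
have -> : \sum_x p x * ((u x - mu) ^+ 2 / 4 + 1) = (\sum_x p x * (u x - mu) ^+ 2) / 4 + 1.
  transitivity (\sum_x (p x * (u x - mu) ^+ 2 / 4 + p x)).
    by apply: eq_bigr => M _; ring.
  by rewrite big_split /= -mulr_suml Hp1.
have -> : \sum_y p y * ((u y - mu) ^+ 2 / 4) = (\sum_x p x * (u x - mu) ^+ 2) / 4.
  rewrite mulr_suml; apply: eq_bigr => M _; ring.
lra.
Qed.

End Prob.

Theorem lemma2 (R : realType) (F : mechanism R) :
  is_mechanism F ->
  exists Fs : mechanism R, is_mechanism Fs /\
    forall (n m : nat) (E : {set {set 'I_n}}) (own : 'I_n -> 'I_m),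
      simple_graph E ->
      forall i : 'I_m,
        var_utility Fs E own i <= var_utility F E own i / 2 + 1 /\
        exp_utility Fs E own i = exp_utility F E own i.
Proof.
move=> HF.
have H : forall n m (E : {set {set 'I_n}}) (own : 'I_n -> 'I_m),
  exists q : {ffun {set {set 'I_n}} -> R}, simple_graph E ->
   is_random_matching E q /\
   forall i, let u := fun M => (utility own i M)%:R : R in
     let mu := \sum_M F n m E own M * u M in
     \sum_M q M * u M = mu /\
     \sum_M q M * (u M - mu) ^+ 2 <= (\sum_M F n m E own M * (u M - mu) ^+ 2) / 2 + 1.
  move=> n m E own; case: (boolP (simple_graph E)) => HE.
    have [q [Hq Hi]] := inst own HE (HF n m E own HE).
    by exists q.
  by exists (F n m E own) => /negP.
pose Fs : mechanism R := fun n m E own =>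
  proj1_sig (constructive_indefinite_description _ (H n m E own)).
have HFs : forall n m E own, simple_graph E -> _ :=
  fun n m E own => proj2_sig (constructive_indefinite_description _ (H n m E own)).
exists Fs; split.
  by move=> n m E own HE; have [] := HFs n m E own HE.
move=> n m E own HE i.
have [_ /(_ i) /= [H1 H2]] := HFs n m E own HE.
have He : exp_utility Fs E own i = exp_utility F E own i by exact: H1.
split => //.
by rewrite /var_utility He; exact: H2.
Qed.
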